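(* Let $n,m\ge 1$, $T>0$, $X_0\in\mathbb{R}^n$, and let $A\in\mathbb{R}^{n\times n}$ have only real eigenvalues. Let $\mathcal{U}\subset\mathbb{R}^m$ be a compact convex polytope with $0\in\mathcal{U}$, given as the convex hull of finitely many vertices $u_1,\dots,u_N\in\mathbb{R}^m$. Let $\mathcal{B}\subset\mathbb{R}^{n\times m}$ be compact. Let $d\in\mathbb{R}^n$ with $\|d\|=1$ be an eigenvector of $A^\top$ (with real eigenvalue). Define $P_0 := e^{A^\top T} d$. For each $i\in\{1,\dots,N\}$ choose $$B_i \in \arg\max_{B\in\mathcal{B}} P_0^\top B u_i,$$ and choose $$i^\ast \in \arg\max_{1\le i\le N} P_0^\top B_i u_i .$$ Then $B^\ast := B_{i^\ast}$ satisfies $B^\ast\in\arg\max_{B\in\mathcal{B}} G_d(B)$, where $G_d$ is the directional growth metric defined in the context.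
   Context: For a fixed $B\in\mathcal{B}$ consider the linear control system $\dot X(t)=AX(t)+Bu(t)$, $X(0)=X_0$, $t\in[0,T]$, with measurable controls $u(t)\in\mathcal{U}$. The co-state with terminal condition $P(T)=d$ is $P(t)=e^{A^\top (T-t)}d$, i.e. the solution of $\dot P(t)=-A^\top P(t)$, $P(T)=d$. Let $u_B^\ast(\cdot)$ be any admissible control satisfying $u_B^\ast(t)\in\arg\max_{u\in\mathcal{U}} P(t)^\top B u$ for all $t\in[0,T]$ (the Pontryagin maximum-principle control for the boundary trajectory with terminal co-state $d$), and let $X_{d,B}:=X(T)$ denote the terminal state of the trajectory driven by $u_B^\ast$. Let $c_0:=e^{AT}X_0$ be the endpoint at time $T$ of the zero-input trajectory ($u\equiv 0$). The directional growth metric is $$G_d(B):= d^\top\big(X_{d,B}-c_0\big).$$ *)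

(* Defs.v *)
From HB Require Import structures.
From mathcomp Require Import all_boot all_order all_algebra.
From mathcomp Require Import all_classical all_reals all_analysis.
Set Implicit Arguments. Unset Strict Implicit. Unset Printing Implicit Defensive.
Import Order.TTheory GRing.Theory Num.Theory.
Import numFieldNormedType.Exports.
Local Open Scope classical_set_scope.
Local Open Scope ring_scope.

Section Defs.
Variable R : realType.

Definition mxpow (n : nat) (A : 'M[R]_n) (k : nat) : 'M[R]_n :=
  iter k (mulmx A) 1%:M.

Definition expmx (n : nat) (A : 'M[R]_n) (t : R) : 'M[R]_n :=
  \matrix_(i, j) limn (fun N : nat =>
      \sum_(k < N) (t ^+ k / (k`!)%:R) * mxpow A k i j).

Definition bilin (n m : nat) (p : 'cV[R]_n) (M : 'M[R]_(n, m)) (v : 'cV[R]_m) : R :=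
  (p^T *m M *m v) 0 0.

Definition conv_hull (m N : nat) (vtx : 'I_N -> 'cV[R]_m) : set 'cV[R]_m :=
  [set u | exists w : 'I_N -> R,
     (forall i, 0 <= w i) /\ \sum_(i < N) w i = 1 /\ u = \sum_(i < N) w i *: vtx i].

Definition tint (T : R) : set R := `[0, T]%classic.

Definition admissible (m : nat) (U : set 'cV[R]_m) (T : R) (u : R -> 'cV[R]_m) : Prop :=
  (forall i, measurable_fun (tint T) (fun t => u t i 0)) /\
  (forall t, tint T t -> U (u t)).

Definition costate (n : nat) (A : 'M[R]_n) (T : R) (d : 'cV[R]_n) (t : R) : 'cV[R]_n :=
  expmx A^T (T - t) *m d.

Definition pmp_control (n m : nat) (A : 'M[R]_n) (B : 'M[R]_(n, m)) (U : set 'cV[R]_m)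
    (T : R) (d : 'cV[R]_n) (u : R -> 'cV[R]_m) : Prop :=
  admissible U T u /\
  forall t, tint T t -> U (u t) /\
    forall v, U v -> bilin (costate A T d t) B v <= bilin (costate A T d t) B (u t).

(* terminal state X(T) of  X' = A X + B u, X(0) = X0  (variation of constants) *)
Definition terminal_state (n m : nat) (A : 'M[R]_n) (B : 'M[R]_(n, m)) (X0 : 'cV[R]_n)
    (T : R) (u : R -> 'cV[R]_m) : 'cV[R]_n :=
  expmx A T *m X0 +
  \col_(i < n) Rintegral lebesgue_measure (tint T)
      (fun s => (expmx A (T - s) *m B *m u s) i 0).

(* directional growth metric  G_d(B) = d^T (X_{d,B} - c_0), computed for the
   given maximum-principle control u *)
Definition growth (n m : nat) (A : 'M[R]_n) (B : 'M[R]_(n, m)) (X0 : 'cV[R]_n)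
    (T : R) (d : 'cV[R]_n) (u : R -> 'cV[R]_m) : R :=
  (d^T *m (terminal_state A B X0 T u - expmx A T *m X0)) 0 0.

End Defs.

(* Main.v *)
Require Import Defs.
From HB Require Import structures.
From mathcomp Require Import all_boot all_order all_algebra.
From mathcomp Require Import all_classical all_reals all_analysis.
From mathcomp Require Import ring measurable_realfun.
Import Order.TTheory GRing.Theory Num.Theory.
Import numFieldNormedType.Exports.
Local Open Scope classical_set_scope.
Local Open Scope ring_scope.
Set Implicit Arguments. Unset Strict Implicit.

Section Aux.
Variable R : realType.

Lemma mxpowSr (n : nat) (A : 'M[R]_n) k : mxpow A k.+1 = mxpow A k *m A.
Proof.
elim: k => [|k IH]; first by rewrite /mxpow /= mulmx1 mul1mx.
change (A *m mxpow A k.+1 = mxpow A k.+1 *m A).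
by rewrite {1}IH mulmxA.
Qed.

Lemma mxpow_tr (n : nat) (A : 'M[R]_n) k : mxpow A^T k = (mxpow A k)^T.
Proof.
elim: k => [|k IH]; first by rewrite /mxpow /= trmx1.
change (A^T *m mxpow A^T k = (mxpow A k.+1)^T).
by rewrite mxpowSr IH trmx_mul.
Qed.

Lemma expmx_tr (n : nat) (A : 'M[R]_n) t : expmx A^T t = (expmx A t)^T.
Proof.
apply/matrixP => i j; rewrite !mxE; apply: (f_equal (fun f : nat -> R => limn f)); apply/funext => N.
by apply: eq_bigr => k _; rewrite mxpow_tr mxE.
Qed.

Lemma mxpow_eig (n : nat) (A : 'M[R]_n) (d : 'cV[R]_n) lam k :
  A *m d = lam *: d -> mxpow A k *m d = lam ^+ k *: d.
Proof.
move=> Ad; elim: k => [|k IH]; first by rewrite /mxpow /= mul1mx scale1r.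
change (A *m mxpow A k *m d = lam ^+ k.+1 *: d).
rewrite -mulmxA IH -scalemxAr Ad.
by rewrite scalerA exprS mulrC.
Qed.

Definition cA (n : nat) (A : 'M[R]_n) : R := 1 + \sum_i \sum_j `|A i j|.

Lemma cA_ge1 (n : nat) (A : 'M[R]_n) : 1 <= cA A.
Proof. by rewrite /cA lerDl sumr_ge0 // => i _; rewrite sumr_ge0. Qed.

Lemma mxpow_bound (n : nat) (A : 'M[R]_n) k i j : `|mxpow A k i j| <= cA A ^+ k.
Proof.
elim: k i j => [|k IH] i j.
  rewrite /mxpow /= mxE expr0; by case: (i == j); rewrite ?normr1 ?normr0.
change (`|(A *m mxpow A k) i j| <= cA A ^+ k.+1); rewrite mxE.
apply: (le_trans (ler_norm_sum _ _ _)).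
apply: (@le_trans _ _ (\sum_l `|A i l| * cA A ^+ k)).
  by apply: ler_sum => l _; rewrite normrM ler_wpM2l.
rewrite -mulr_suml exprS ler_wpM2r ?exprn_ge0 //.
  by apply: le_trans (cA_ge1 A).
rewrite /cA [X in _ <= 1 + X](bigD1 i) //= addrCA lerDl; apply: addr_ge0 => //.
by rewrite sumr_ge0 // => l _; rewrite sumr_ge0.
Qed.

Definition pS (n : nat) (A : 'M[R]_n) (t : R) i j : R^nat := fun N =>
  \sum_(k < N) (t ^+ k / (k`!)%:R) * mxpow A k i j.

Lemma term_bound (n : nat) (A : 'M[R]_n) (t T' : R) i j k : `|t| <= T' ->
  `|(t ^+ k / (k`!)%:R) * mxpow A k i j| <= exp_coeff (T' * cA A) k.
Proof.
move=> tT; rewrite /exp_coeff /= normrM exprMn mulrAC.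
apply: ler_pM.
- exact: normr_ge0.
- exact: normr_ge0.
- rewrite normrM normfV normrX [`|_%:R|]ger0_norm // ler_wpM2r //.
  apply: lerXn2r; rewrite ?nnegrE //; exact: le_trans tT.
- exact: (mxpow_bound A k i j).
Qed.

Lemma pS_series (n : nat) (A : 'M[R]_n) t i j :
  pS A t i j = series (fun k => (t ^+ k / (k`!)%:R) * mxpow A k i j).
Proof. by apply/funext => N; rewrite /pS /series /= big_mkord. Qed.

Lemma pS_cvg (n : nat) (A : 'M[R]_n) t i j : pS A t i j @ \oo --> expmx A t i j.
Proof.
have hc : cvgn (pS A t i j).
  rewrite pS_series; apply: normed_cvg.
  apply: (@series_le_cvg _ _ (exp_coeff (`|t| * cA A))).
  - by move=> k; rewrite /= normr_ge0.
  - move=> k; apply: exp_coeff_ge0; apply: mulr_ge0 => //.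
    exact: le_trans (cA_ge1 A).
  - by move=> k; rewrite /=; exact: term_bound.
  - exact: is_cvg_series_exp_coeff.
by rewrite mxE; exact: hc.
Qed.



Lemma pS_bound (n : nat) (A : 'M[R]_n) (t T' : R) i j N : `|t| <= T' ->
  `|pS A t i j N| <= expR (T' * cA A).
Proof.
move=> tT; have T'0 : 0 <= T' by apply: le_trans tT.
apply: (le_trans (ler_norm_sum _ _ _)).
apply: (@le_trans _ _ (series (exp_coeff (T' * cA A)) N)).
  rewrite /series /= big_mkord; apply: ler_sum => k _; exact: term_bound.
apply: nondecreasing_cvgn_le; last exact: is_cvg_series_exp_coeff.
apply: nondecreasing_series => k _ _; apply: exp_coeff_ge0; apply: mulr_ge0 => //.
exact: le_trans (cA_ge1 A).
Qed.

Lemma expmx_bound (n : nat) (A : 'M[R]_n) (t T' : R) i j : `|t| <= T' ->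
  `|expmx A t i j| <= expR (T' * cA A).
Proof.
move=> tT.
have h : (fun N => `|pS A t i j N|) @ \oo --> `|expmx A t i j|.
  by apply: cvg_norm; exact: pS_cvg.
rewrite -(cvg_lim (@Rhausdorff R) h).
apply: limr_le; first by apply/cvg_ex; eexists; exact: h.
by apply: nearW => N; exact: pS_bound.
Qed.

Lemma cvg_sum_ord (k : nat) (F : 'I_k -> nat -> R) (a : 'I_k -> R) :
  (forall j, F j @ \oo --> a j) -> (fun N => \sum_j F j N) @ \oo --> \sum_j a j.
Proof.
elim: k F a => [|k IH] F a h.
  under eq_cvg do rewrite big_ord0; rewrite big_ord0; exact: cvg_cst.
under eq_cvg do rewrite big_ord_recr; rewrite big_ord_recr.
apply: cvgD; last exact: h.
exact: (IH (fun j => F (widen_ord (leqnSn k) j))).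
Qed.

Lemma expmx_eig (n : nat) (M : 'M[R]_n) (d : 'cV[R]_n) lam t :
  M *m d = lam *: d -> expmx M t *m d = expR (t * lam) *: d.
Proof.
move=> Md; apply/matrixP => i k; rewrite !mxE.
have h : (fun N => \sum_j pS M t i j N * d j k) @ \oo -->
    \sum_j expmx M t i j * d j k.
  apply: cvg_sum_ord => j; apply: cvgMr_tmp; exact: pS_cvg.
have E N : \sum_j pS M t i j N * d j k = d i k * series (exp_coeff (t * lam)) N.
  rewrite /pS /series /= big_mkord.
  under eq_bigr do rewrite mulr_suml.
  rewrite exchange_big /= mulr_sumr; apply: eq_bigr => m _.
  under eq_bigr do rewrite -mulrA.
  rewrite -mulr_sumr.
  have := congr1 (fun X : 'cV[R]_n => X i k) (mxpow_eig m Md).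
  rewrite !mxE => ->.
  rewrite /exp_coeff /= exprMn.
  by ring.
have h2 : (fun N => d i k * series (exp_coeff (t * lam)) N) @ \oo -->
    d i k * expR (t * lam).
  apply: cvgMl_tmp; exact: is_cvg_series_exp_coeff.
have e : (fun N => \sum_j pS M t i j N * d j k) =
   (fun N => d i k * series (exp_coeff (t * lam)) N) by apply/funext => N; exact: E.
rewrite e in h.
by rewrite -(cvg_lim (@Rhausdorff R) h) (cvg_lim (@Rhausdorff R) h2) mulrC.
Qed.



Lemma expmx_meas (n : nat) (A : 'M[R]_n) (T : R) (D : set R) i j :
  measurable_fun D (fun s => expmx A (T - s) i j).
Proof.
apply: (@measurable_fun_cvg _ _ _ D (fun N s => pS A (T - s) i j N)).
  move=> N; rewrite /pS; apply: measurable_sum => k.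
  apply: measurable_funM; last exact: measurable_cst.
  apply: measurable_funM; last exact: measurable_cst.
  apply: measurable_funX; apply: measurable_funB; first exact: measurable_cst.
  exact: measurable_id.
move=> s _; exact: pS_cvg.
Qed.

Definition good (T : R) (f : R -> R) :=
  measurable_fun (tint T) f /\ exists M, forall s, tint T s -> `|f s| <= M.

Lemma good_cst T c : good T (fun _ => c).
Proof. by split; [exact: measurable_cst | exists `|c|]. Qed.

Lemma good_add T f g : good T f -> good T g -> good T (fun s => f s + g s).
Proof.
move=> [mf [M1 b1]] [mg [M2 b2]]; split; first exact: measurable_funD.
exists (M1 + M2) => s Ds; apply: (le_trans (ler_normD _ _)).
by apply: lerD; [exact: b1 | exact: b2].
Qed.

Lemma good_mul T f g : good T f -> good T g -> good T (fun s => f s * g s).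
Proof.
move=> [mf [M1 b1]] [mg [M2 b2]]; split; first exact: measurable_funM.
exists (M1 * M2) => s Ds; rewrite normrM.
by apply: ler_pM => //; [exact: b1 | exact: b2].
Qed.

Lemma good_sum T (k : nat) (F : 'I_k -> R -> R) :
  (forall j, good T (F j)) -> good T (fun s => \sum_j F j s).
Proof.
elim: k F => [|k IH] F h.
  have -> : (fun s => \sum_(j < 0) F j s) = (fun _ => 0).
    by apply/funext => s; rewrite big_ord0.
  exact: good_cst.
have -> : (fun s => \sum_(j < k.+1) F j s) =
  (fun s => \sum_(j < k) F (widen_ord (leqnSn k) j) s + F ord_max s).
  by apply/funext => s; rewrite big_ord_recr.
apply: good_add; last exact: h.
exact: (IH (fun j => F (widen_ord (leqnSn k) j))).
Qed.

Lemma tint_meas (T : R) : measurable (tint T).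
Proof. exact: measurable_itv. Qed.

Lemma good_int (T : R) (f : R -> R) : good T f -> lebesgue_measure.-integrable (tint T) (EFin \o f).
Proof.
move=> [mf [M b]]; apply: measurable_bounded_integrable => //.
- exact: tint_meas.
- rewrite /tint; apply: (@le_lt_trans _ _ (lebesgue_measure [set` `[0, T]])).
    exact: lexx.
  rewrite lebesgue_measure_itv; case: ifP => _ //; exact: ltry.
- exists M; split; first exact: num_real.
  move=> x Mx y Dy; apply: le_trans (b y Dy) _; exact: ltW.
Qed.

Lemma Rint_sum (T : R) (k : nat) (F : 'I_k -> R -> R) :
  (forall j, good T (F j)) ->
  Rintegral lebesgue_measure (tint T) (fun s => \sum_j F j s) =
  \sum_j Rintegral lebesgue_measure (tint T) (F j).
Proof.
elim: k F => [|k IH] F h.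
  rewrite big_ord0.
  have -> : (fun s => \sum_(j < 0) F j s) = (fun _ => 0).
    by apply/funext => s; rewrite big_ord0.
  by rewrite Rintegral_cst ?mul0r //; exact: tint_meas.
have -> : (fun s => \sum_(j < k.+1) F j s) =
  (fun s => \sum_(j < k) F (widen_ord (leqnSn k) j) s + F ord_max s).
  by apply/funext => s; rewrite big_ord_recr.
rewrite big_ord_recr /= RintegralD.
- by rewrite (IH (fun j => F (widen_ord (leqnSn k) j))).
- exact: tint_meas.
- apply: good_int; apply: good_sum => j; exact: h.
- exact: good_int.
Qed.



Lemma bilinZ (n m : nat) (p : 'cV[R]_n) a (M : 'M[R]_(n, m)) v :
  bilin (a *: p) M v = a * bilin p M v.
Proof. by rewrite /bilin linearZ /= -!scalemxAl mxE. Qed.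

Lemma bilin_sum (n m N : nat) (p : 'cV[R]_n) (M : 'M[R]_(n, m))
    (w : 'I_N -> R) (vtx : 'I_N -> 'cV[R]_m) :
  bilin p M (\sum_i w i *: vtx i) = \sum_i w i * bilin p M (vtx i).
Proof.
rewrite /bilin mulmx_sumr summxE; apply: eq_bigr => i _.
by rewrite -scalemxAr mxE.
Qed.

Lemma bilin_costate_eq (n m : nat) (A : 'M[R]_n) (T : R) (d : 'cV[R]_n)
   (B : 'M[R]_(n, m)) s v :
  bilin (costate A T d s) B v =
  \sum_i d i 0 * (expmx A (T - s) *m B *m v) i 0.
Proof.
rewrite /bilin /costate expmx_tr trmx_mul trmxK -!mulmxA mxE.
by apply: eq_bigr => i _; rewrite mxE !mulmxA.
Qed.

Lemma tintP (T s : R) : tint T s -> 0 <= s /\ s <= T.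
Proof. by rewrite /tint /= in_itv /= => /andP[]. Qed.

Lemma good_E (n : nat) (A : 'M[R]_n) (T : R) i j :
  good T (fun s => expmx A (T - s) i j).
Proof.
split; first exact: expmx_meas.
exists (expR (T * cA A)) => s /tintP [s0 sT]; apply: expmx_bound.
by rewrite ger0_norm ?subr_ge0 // lerBlDr lerDl.
Qed.

Lemma good_f (n m : nat) (A : 'M[R]_n) (T : R) (B : 'M[R]_(n, m))
   (u : R -> 'cV[R]_m) i :
  (forall j, good T (fun s => u s j 0)) ->
  good T (fun s => (expmx A (T - s) *m B *m u s) i 0).
Proof.
move=> hu.
have -> : (fun s => (expmx A (T - s) *m B *m u s) i 0) =
   (fun s => \sum_j (\sum_l expmx A (T - s) i l * B l j) * u s j 0).
  by apply/funext => s; rewrite mxE; apply: eq_bigr => j _; rewrite mxE.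
apply: good_sum => j; apply: good_mul; last exact: hu.
apply: good_sum => l; apply: good_mul; [exact: good_E | exact: good_cst].
Qed.

Lemma good_bilin (n m : nat) (A : 'M[R]_n) (T : R) (d : 'cV[R]_n)
   (B : 'M[R]_(n, m)) (u : R -> 'cV[R]_m) :
  (forall j, good T (fun s => u s j 0)) ->
  good T (fun s => bilin (costate A T d s) B (u s)).
Proof.
move=> hu.
have -> : (fun s => bilin (costate A T d s) B (u s)) =
  (fun s => \sum_i d i 0 * (expmx A (T - s) *m B *m u s) i 0).
  by apply/funext => s; exact: bilin_costate_eq.
apply: good_sum => i; apply: good_mul; [exact: good_cst | exact: good_f].
Qed.

Lemma growth_int (n m : nat) (A : 'M[R]_n) (B : 'M[R]_(n, m)) (X0 : 'cV[R]_n)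
    (T : R) (d : 'cV[R]_n) (u : R -> 'cV[R]_m) :
  (forall j, good T (fun s => u s j 0)) ->
  growth A B X0 T d u =
  Rintegral lebesgue_measure (tint T) (fun s => bilin (costate A T d s) B (u s)).
Proof.
move=> hu; rewrite /growth /terminal_state.
have -> : forall x y : 'cV[R]_n, x + y - x = y by move=> x y; rewrite addrC addKr.
rewrite mxE.
under eq_Rintegral do rewrite bilin_costate_eq.
rewrite Rint_sum; last by move=> i; apply: good_mul; [exact: good_cst | exact: good_f].
apply: eq_bigr => i _; rewrite !mxE RintegralZl //; first exact: tint_meas.
apply: good_int; exact: good_f.
Qed.

Lemma conv_bound (m N : nat) (vtx : 'I_N -> 'cV[R]_m) u :
  conv_hull vtx u -> forall k, `|u k 0| <= \sum_i `|vtx i k 0|.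
Proof.
case=> w [w0 [w1 ->]] k; rewrite summxE.
apply: (le_trans (ler_norm_sum _ _ _)).
apply: (@le_trans _ _ (\sum_i w i * \sum_i `|vtx i k 0|)).
  apply: ler_sum => i _; rewrite mxE normrM ger0_norm // ler_wpM2l //.
  by rewrite (bigD1 i) //= lerDl sumr_ge0.
by rewrite -mulr_suml w1 mul1r.
Qed.

Lemma conv_vtx (m N : nat) (vtx : 'I_N -> 'cV[R]_m) i0 : conv_hull vtx (vtx i0).
Proof.
exists (fun i => (i == i0)%:R); split; first by move=> i; case: (i == i0).
split.
  rewrite (bigD1 i0) //= eqxx big1 ?addr0 // => i /negbTE ->; done.
rewrite (bigD1 i0) //= eqxx scale1r big1 ?addr0 // => i /negbTE ->.
by rewrite scale0r.
Qed.

Lemma adm_good (m N : nat) (vtx : 'I_N -> 'cV[R]_m) (T : R) u :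
  admissible (conv_hull vtx) T u -> forall j, good T (fun s => u s j 0).
Proof.
move=> [mu hu] j; split; first exact: mu.
exists (\sum_i `|vtx i j 0|) => s hs; exact: conv_bound (hu s hs) j.
Qed.

End Aux.
Theorem theorem1 (R : realType) (n m N : nat) (T : R) (X0 : 'cV[R]_n)
    (A : 'M[R]_n) (vtx : 'I_N -> 'cV[R]_m) (Bset : set 'M[R]_(n, m))
    (d : 'cV[R]_n) (Bi : 'I_N -> 'M[R]_(n, m)) (istar : 'I_N) :
  (0 < n)%N -> (0 < m)%N -> 0 < T ->
  (* A has only real eigenvalues: its characteristic polynomial splits over R *)
  (exists s : seq R, char_poly A = \prod_(a <- s) ('X - a%:P)) ->
  conv_hull vtx 0 ->
  compact Bset ->
  \sum_(i < n) d i 0 ^+ 2 = 1 ->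
  (exists lam : R, A^T *m d = lam *: d) ->
  let P0 := expmx A^T T *m d in
  (forall i, Bset (Bi i) /\
     forall B, Bset B -> bilin P0 B (vtx i) <= bilin P0 (Bi i) (vtx i)) ->
  (forall i, bilin P0 (Bi i) (vtx i) <= bilin P0 (Bi istar) (vtx istar)) ->
  Bset (Bi istar) /\
  forall B, Bset B ->
  forall uB uS : R -> 'cV[R]_m,
    pmp_control A B (conv_hull vtx) T d uB ->
    pmp_control A (Bi istar) (conv_hull vtx) T d uS ->
    growth A B X0 T d uB <= growth A (Bi istar) X0 T d uS.
Proof.
move=> _ _ _ _ _ _ _ [lam Hd] P0 HBi Hstar.
split; first exact: (HBi istar).1.
move=> B BB uB uS [admB pmpB] [admS pmpS].
have eP0 : P0 = expR (T * lam) *: d by rewrite /P0 (expmx_eig T Hd).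
have hB i : bilin d B (vtx i) <= bilin d (Bi istar) (vtx istar).
  have h1 := (HBi i).2 B BB; have h2 := Hstar i.
  rewrite eP0 !bilinZ in h1 h2.
  rewrite ler_pM2l ?expR_gt0 // in h1; rewrite ler_pM2l ?expR_gt0 // in h2.
  exact: le_trans h1 h2.
rewrite (growth_int _ _ _ _ (adm_good admB)) (growth_int _ _ _ _ (adm_good admS)).
apply: le_Rintegral.
- exact: tint_meas.
- apply: good_int; apply: good_bilin; exact: adm_good admB.
- apply: good_int; apply: good_bilin; exact: adm_good admS.
move=> s hs.
have [[w [w0 [w1 ->]]] _] := pmpB s hs.
have hS := (pmpS s hs).2 (vtx istar) (conv_vtx vtx istar).
rewrite /costate !(expmx_eig _ Hd) !bilinZ in hS *.
rewrite ler_pM2l ?expR_gt0 // in hS; rewrite ler_pM2l ?expR_gt0 //.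
apply: le_trans hS; rewrite bilin_sum.
apply: (@le_trans _ _ (\sum_i w i * bilin d (Bi istar) (vtx istar))).
  by apply: ler_sum => i _; rewrite ler_wpM2l.
by rewrite -mulr_suml w1 mul1r.
Qed.
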